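(* Let $S=\{p_1,\dots,p_n\}$ be a set of point sites in $\mathbb{R}^d$ with an admissible system of distance functions $\{d_{p_i}\}$, and let $C\subset\mathbb{R}^d$ be a bounded, open, path-connected set. Let $T\subset S$ with $T\neq\emptyset$ and $T\neq S$. Let $w=(w_1,\dots,w_n)$ be a weight vector such that $\mu(C\cap\mathrm{VR}_w(p,S))>0$ for every $p\in S$. Let $\delta>0$ and define $w'$ by $w'_i=w_i+\delta$ if $p_i\in T$ and $w'_i=w_i$ otherwise. Then there exists $t\in T$ with $\mu(C\cap\mathrm{VR}_{w'}(t,S))>\mu(C\cap\mathrm{VR}_w(t,S))$.
   Context: $\mu$ is a measure defined on all Lebesgue-measurable subsets of $\mathbb{R}^d$ such that $\mu$ and $d$-dimensional Lebesgue measure are mutually absolutely continuous. Each site $p\in S$ has a continuous function $d_p:\mathbb{R}^d\to\mathbb{R}_{\ge 0}$. For $p\neq q\in S$ and $\gamma\in\mathbb{R}$ let $R_\gamma(p,q)=\{z\in\mathbb{R}^d : d_p(z)-d_q(z)<\gamma\}$. The system $\{d_p\}_{p\in S}$ is called admissible if for all $p\neq q\in S$ and every bounded open set $C\subset\mathbb{R}^d$ there exist real numbers $m_{pq}<M_{pq}$ such that the function $\gamma\mapsto\mu(C\cap R_\gamma(p,q))$ is continuous on $\mathbb{R}$ and increases (monotonically) from $0$ to $\mu(C)$ as $\gamma$ grows from $m_{pq}$ to $M_{pq}$; moreover $C\cap R_\gamma(p,q)=\emptyset$ for $\gamma\le m_{pq}$ and $C\subset R_\gamma(p,q)$ for $\gamma\ge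 M_{pq}$. For a weight vector $w$, the additively weighted Voronoi region is $\mathrm{VR}_w(p_i,S)=\bigcap_{j\neq i}R_{w_i-w_j}(p_i,p_j)$, i.e. the set of $z$ with $d_{p_i}(z)-w_i<d_{p_j}(z)-w_j$ for all $j\neq i$. *)

(* Defs.v *)
From Stdlib Require Import Reals Lra.
From Stdlib Require Fin.
Open Scope R_scope.

Definition pt (d : nat) := Fin.t d -> R.

Fixpoint prodFin (d : nat) : (Fin.t d -> R) -> R :=
  match d return (Fin.t d -> R) -> R with
  | O => fun _ => 1
  | S k => fun f => f Fin.F1 * prodFin k (fun i => f (Fin.FS i))
  end.

Definition box_vol {d} (a b : pt d) : R := prodFin d (fun i => b i - a i).

Definition outer_le {d} (X : pt d -> Prop) (r : R) : Prop :=
  forall eta, 0 < eta ->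
  exists a b : nat -> pt d,
    (forall k i, a k i <= b k i) /\
    (forall x, X x -> exists k, forall i, a k i <= x i <= b k i) /\
    (forall N, sum_f_R0 (fun k => box_vol (a k) (b k)) N <= r + eta).

Definition leb_null {d} (X : pt d -> Prop) : Prop := outer_le X 0.

(** Open sets of R^d (sup-norm balls, same topology as Euclidean). *)
Definition rd_open {d} (A : pt d -> Prop) : Prop :=
  forall x, A x -> exists e, 0 < e /\
    forall y, (forall i, Rabs (y i - x i) < e) -> A y.

(** Lebesgue measurability (Stein-Shakarchi definition): for every eps > 0
    there is an open O containing E with m*(O \ E) <= eps. *)
Definition leb_measurable {d} (E : pt d -> Prop) : Prop :=
  forall eps, 0 < eps -> exists O, rd_open O /\ (forall x, E x -> O x) /\
    outer_le (fun x => O x /\ ~ E x) eps.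

Definition rd_bounded {d} (A : pt d -> Prop) : Prop :=
  exists M, forall x, A x -> forall i, Rabs (x i) <= M.

Definition cont_fun {d} (f : pt d -> R) : Prop :=
  forall x e, 0 < e -> exists h, 0 < h /\
    forall y, (forall i, Rabs (y i - x i) < h) -> Rabs (f y - f x) < e.

Definition rd_path_connected {d} (A : pt d -> Prop) : Prop :=
  forall x y, A x -> A y ->
  exists g : R -> pt d,
    g 0 = x /\ g 1 = y /\ (forall t, 0 <= t <= 1 -> A (g t)) /\
    (forall t e, 0 <= t <= 1 -> 0 < e -> exists h, 0 < h /\
       forall s, 0 <= s <= 1 -> Rabs (s - t) < h ->
         forall i, Rabs (g s i - g t i) < e).

Inductive ereal := ER (r : R) | EPInf.

Definition ere_lt (x y : ereal) : Prop :=
  match x, y with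
  | ER a, ER b => a < b
  | ER _, EPInf => True
  | EPInf, _ => False
  end.

Definition esum_to (f : nat -> ereal) (s : ereal) : Prop :=
  match s with
  | ER l => exists r : nat -> R, (forall n, f n = ER (r n)) /\ infinite_sum r l
  | EPInf => (exists n, f n = EPInf) \/
             (exists r : nat -> R, (forall n, f n = ER (r n)) /\
                cv_infty (fun N => sum_f_R0 r N))
  end.

(** mu is a measure defined on (at least) all Lebesgue-measurable sets. *)
Definition is_measure_on_leb {d} (mu : (pt d -> Prop) -> ereal) : Prop :=
  mu (fun _ => False) = ER 0 /\
  (forall A, leb_measurable A ->
     match mu A with ER r => 0 <= r | EPInf => True end) /\
  (forall A : nat -> pt d -> Prop,
     (forall k, leb_measurable (A k)) ->
     (forall k l x, k <> l -> A k x -> A l x -> False) ->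
     esum_to (fun k => mu (A k)) (mu (fun x => exists k, A k x))).

Definition mutually_ac_leb {d} (mu : (pt d -> Prop) -> ereal) : Prop :=
  forall A, leb_measurable A -> (mu A = ER 0 <-> leb_null A).

Definition Rgam {d n} (dist : Fin.t n -> pt d -> R) (i j : Fin.t n) (gamma : R)
  : pt d -> Prop := fun z => dist i z - dist j z < gamma.

Definition admissible {d n} (mu : (pt d -> Prop) -> ereal)
  (dist : Fin.t n -> pt d -> R) : Prop :=
  forall i j : Fin.t n, i <> j ->
  forall C : pt d -> Prop, rd_bounded C -> rd_open C ->
  exists m M : R, m < M /\
  exists f : R -> R,
    (forall gamma, mu (fun z => C z /\ Rgam dist i j gamma z) = ER (f gamma)) /\
    continuity f /\
    (forall g1 g2, m <= g1 -> g1 <= g2 -> g2 <= M -> f g1 <= f g2) /\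
    f m = 0 /\ mu C = ER (f M) /\
    (forall gamma, gamma <= m -> forall z, C z -> ~ Rgam dist i j gamma z) /\
    (forall gamma, M <= gamma -> forall z, C z -> Rgam dist i j gamma z).

Definition VR {d n} (dist : Fin.t n -> pt d -> R) (w : Fin.t n -> R)
  (i : Fin.t n) : pt d -> Prop :=
  fun z => forall j, j <> i -> Rgam dist i j (w i - w j) z.

(* Main.v *)
Require Import Defs.
From Stdlib Require Import Reals.
From Stdlib Require Fin.
From Stdlib Require Import Lra Lia List.
From Stdlib Require Import Classical FunctionalExtensionality PropExtensionality ClassicalEpsilon.
Open Scope R_scope.

Lemma set_eq {X : Type} (P Q : X -> Prop) : (forall z, P z <-> Q z) -> P = Q.
Proof. intro H. apply functional_extensionality; intro z. apply propositional_extensionality; auto. Qed.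

Lemma ER_inj a b : ER a = ER b -> a = b.
Proof. intro H; injection H; auto. Qed.

Lemma prodFin_ext d (f g : Fin.t d -> R) : (forall i, f i = g i) -> prodFin d f = prodFin d g.
Proof. intro H. replace g with f; auto. apply functional_extensionality; auto. Qed.

Lemma prodFin_scale d (l : R) (f : Fin.t d -> R) :
  prodFin d (fun i => l * f i) = l ^ d * prodFin d f.
Proof.
  revert f; induction d as [|k IH]; intro f; simpl. ring.
  rewrite (IH (fun i => f (Fin.FS i))). ring.
Qed.

Lemma prodFin_nonneg d (f : Fin.t d -> R) : (forall i, 0 <= f i) -> 0 <= prodFin d f.
Proof.
  revert f; induction d as [|k IH]; intros f H; simpl. lra.
  apply Rmult_le_pos; auto.
Qed.

Lemma prodFin_le1 d (f : Fin.t d -> R) : (forall i, 0 <= f i <= 1) -> prodFin d f <= 1.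
Proof.
  revert f; induction d as [|k IH]; intros f H; simpl. lra.
  assert (H1 := H Fin.F1). assert (H2 := IH (fun i => f (Fin.FS i)) (fun i => H (Fin.FS i))).
  assert (0 <= prodFin k (fun i => f (Fin.FS i))) by (apply prodFin_nonneg; intro; apply H).
  nra.
Qed.

Lemma prodFin_pick d (f : Fin.t d -> R) : (forall i, 0 <= f i <= 1) -> forall j, prodFin d f <= f j.
Proof.
  revert f; induction d as [|k IH]; intros f H j. inversion j.
  apply (Fin.caseS' j); simpl.
  - assert (H1 := H Fin.F1). assert (H2 := prodFin_le1 k (fun i => f (Fin.FS i)) (fun i => H (Fin.FS i))).
    assert (0 <= prodFin k (fun i => f (Fin.FS i))) by (apply prodFin_nonneg; intro; apply H).
    nra.
  - intro p. assert (H1 := H Fin.F1). assert (H2 := IH (fun i => f (Fin.FS i)) (fun i => H (Fin.FS i)) p).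
    assert (0 <= prodFin k (fun i => f (Fin.FS i))) by (apply prodFin_nonneg; intro; apply H).
    simpl in H2. nra.
Qed.

Lemma prodFin_zero k : prodFin (S k) (fun _ => 0) = 0.
Proof. simpl. ring. Qed.

Lemma fin_min m (P : Fin.t m -> R -> Prop) :
  (forall i, exists e, 0 < e /\ forall e', 0 < e' <= e -> P i e') ->
  exists e, 0 < e /\ forall i, P i e.
Proof.
  revert P; induction m as [|k IH]; intros P H.
  - exists 1; split; [lra|]. intro i; inversion i.
  - destruct (IH (fun i e => forall e', 0 < e' <= e -> P (Fin.FS i) e')) as [e1 [He1 H1]].
    { intro i. destruct (H (Fin.FS i)) as [e [He H']]. exists e; split; auto.
      intros e' He' e'' He''. apply H'; lra. }
    destruct (H Fin.F1) as [e0 [He0 H0]].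
    exists (Rmin e0 e1); split. apply Rmin_pos; auto.
    intro i; apply (Fin.caseS' i).
    + apply H0. split. apply Rmin_pos; auto. apply Rmin_l.
    + intro p. apply (H1 p). split. apply Rmin_pos; auto. apply Rmin_r.
Qed.

Fixpoint fin_enum (n : nat) : list (Fin.t n) :=
  match n with O => nil | S m => Fin.F1 :: map Fin.FS (fin_enum m) end.

Lemma fin_enum_all n (i : Fin.t n) : In i (fin_enum n).
Proof.
  induction i as [k|k i IH]; simpl. left; auto. right. apply in_map; auto.
Qed.

Lemma Rdiv_le_0_compat (a b : R) : 0 <= a -> 0 < b -> 0 <= a / b.
Proof. intros. unfold Rdiv. apply Rmult_le_pos; auto. left; apply Rinv_0_lt_compat; auto. Qed.

Definition ball {d} (x : pt d) (e : R) : pt d -> Prop :=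
  fun z => forall i, Rabs (z i - x i) < e.

Lemma mu_ext {d} (mu : (pt d -> Prop) -> ereal) (P Q : pt d -> Prop) :
  (forall z, P z <-> Q z) -> mu P = mu Q.
Proof. intro H. rewrite (set_eq P Q H). auto. Qed.

Lemma mu_empty {d} (mu : (pt d -> Prop) -> ereal) (P : pt d -> Prop) :
  is_measure_on_leb mu -> (forall z, ~ P z) -> mu P = ER 0.
Proof.
  intros [H0 _] H. rewrite <- H0. apply mu_ext. intro z; split; [apply H| tauto].
Qed.

Lemma outer_le_empty k (X : pt (S k) -> Prop) r : (forall z, ~ X z) -> 0 <= r -> outer_le X r.
Proof.
  intros HX Hr eta Heta. exists (fun _ _ => 0), (fun _ _ => 0). split; [|split].
  - intros; lra.
  - intros x Hx; exfalso; apply (HX x Hx).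
  - intro N. assert (sum_f_R0 (fun k0 => box_vol (fun _ : Fin.t (S k) => 0) (fun _ => 0)) N = 0).
    { induction N; simpl. unfold box_vol. simpl. ring. rewrite IHN. unfold box_vol; simpl; ring. }
    rewrite H; lra.
Qed.

Lemma open_meas k (E : pt (S k) -> Prop) : rd_open E -> leb_measurable E.
Proof.
  intros HE eps Heps. exists E. split; auto. split; auto.
  apply outer_le_empty. intros z [a b]; auto. lra.
Qed.

Lemma mu_nonneg {d} (mu : (pt d -> Prop) -> ereal) A r :
  is_measure_on_leb mu -> leb_measurable A -> mu A = ER r -> 0 <= r.
Proof.
  intros [_ [H _]] HA E. specialize (H A HA). rewrite E in H. auto.
Qed.

Lemma sum_eventually (r : nat -> R) :
  (forall k, (2 <= k)%nat -> r k = 0) -> infinite_sum r (r 0%nat + r 1%nat).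
Proof.
  intros H eps Heps. exists 1%nat. intros m Hm.
  assert (sum_f_R0 r m = r 0%nat + r 1%nat).
  { clear Heps. induction m as [|m IHm]. lia. destruct m. simpl. ring.
    change (sum_f_R0 r (S (S m))) with (sum_f_R0 r (S m) + r (S (S m))).
    rewrite H by lia. rewrite IHm by lia. ring. }
  rewrite H0. unfold R_dist. rewrite Rminus_diag, Rabs_R0. auto.
Qed.

Lemma additive2 k (mu : (pt (S k) -> Prop) -> ereal) (X Y : pt (S k) -> Prop) u :
  is_measure_on_leb mu -> leb_measurable X -> leb_measurable Y ->
  (forall z, X z -> Y z -> False) ->
  mu (fun z => X z \/ Y z) = ER u ->
  exists x y, mu X = ER x /\ mu Y = ER y /\ u = x + y.
Proof.
  intros Hmu HX HY Hd Hu.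
  set (A := fun k0 : nat => match k0 with O => X | 1%nat => Y | _ => fun _ : pt (S k) => False end).
  destruct Hmu as [H0 [Hnn Hadd]].
  assert (Hm : forall k0, leb_measurable (A k0)).
  { intro k0. destruct k0 as [|[|k0]]; simpl; auto. apply open_meas. intros x [] . }
  assert (Hdj : forall k0 l x, k0 <> l -> A k0 x -> A l x -> False).
  { intros k0 l x Hkl. destruct k0 as [|[|k0]]; destruct l as [|[|l]]; simpl; try tauto.
    intros; eapply Hd; eauto. intros; eapply Hd; eauto. }
  specialize (Hadd A Hm Hdj).
  assert (mu (fun x => exists k0, A k0 x) = ER u).
  { rewrite <- Hu. apply mu_ext. intro z; split.
    - intros [k0 Hk]. destruct k0 as [|[|k0]]; simpl in Hk; tauto.
    - intros [H|H]. exists O; auto. exists 1%nat; auto. }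
  rewrite H in Hadd. simpl in Hadd. destruct Hadd as [r [Hr Hs]].
  exists (r O), (r 1%nat). split; [apply (Hr O)|]. split; [apply (Hr 1%nat)|].
  apply (uniqueness_sum r); auto. apply sum_eventually.
  intros k0 Hk. specialize (Hr k0). destruct k0 as [|[|k0]]; try lia.
  simpl in Hr. rewrite H0 in Hr. symmetry; apply ER_inj; auto.
Qed.

Definition cube {d} (c : pt d) (s : R) : pt d -> Prop :=
  fun z => forall i, c i - s <= z i <= c i + s.

Lemma cube_nonnull k (c : pt (S k)) s (X : pt (S k) -> Prop) :
  0 < s -> rd_bounded X -> ~ leb_null X -> ~ leb_null (cube c s).
Proof.
  intros Hs [M HM] HX HK. apply HX. intros eta Heta.
  assert (HM0 : 0 <= M).
  { destruct (classic (exists x, X x)) as [[x Hx]|Hn].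
    - specialize (HM x Hx Fin.F1). assert (0 <= Rabs (x Fin.F1)) by apply Rabs_pos. lra.
    - exfalso. apply HX. apply outer_le_empty; [|lra]. intros z Hz; apply Hn; eauto. }
  set (lam := (M + 1) / s).
  assert (Hl : 0 < lam) by (unfold lam; apply Rdiv_lt_0_compat; lra).
  assert (Hld : 0 < lam ^ (S k)) by (apply pow_lt; auto).
  destruct (HK (eta / lam ^ (S k))) as [a [b [Hab [Hcov Hsum]]]].
  { apply Rdiv_lt_0_compat; auto. }
  exists (fun kk i => lam * (a kk i - c i)), (fun kk i => lam * (b kk i - c i)).
  split; [|split].
  - intros kk i. apply Rmult_le_compat_l; [lra|]. specialize (Hab kk i); lra.
  - intros x Hx. set (y := fun i => c i + x i / lam).
    destruct (Hcov y) as [kk Hkk].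
    { intro i. unfold y. specialize (HM x Hx i).
      assert (Rabs (x i / lam) <= s).
      { unfold Rdiv. rewrite Rabs_mult, Rabs_inv, (Rabs_right lam) by lra.
        unfold lam. replace (/ ((M+1)/s)) with (s / (M+1)) by (field; lra).
        apply Rle_trans with ((M+1) * (s/(M+1))).
        apply Rmult_le_compat_r. apply Rdiv_le_0_compat; lra. lra.
        right; field; lra. }
      revert H; split_Rabs; lra. }
    exists kk. intro i. specialize (Hkk i). unfold y in Hkk.
    assert (E : x i = lam * (c i + x i / lam - c i)) by (field; lra).
    split; rewrite E; apply Rmult_le_compat_l; lra.
  - intro N. specialize (Hsum N).
    assert (E : sum_f_R0 (fun kk => box_vol (fun i => lam * (a kk i - c i)) (fun i => lam * (b kk i - c i))) N
              = lam ^ (S k) * sum_f_R0 (fun kk => box_vol (a kk) (b kk)) N).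
    { rewrite scal_sum. apply sum_eq. intros i _. unfold box_vol.
      rewrite Rmult_comm. rewrite <- prodFin_scale. apply prodFin_ext. intro j. ring. }
    rewrite E. apply Rle_trans with (lam ^ (S k) * (0 + eta / lam ^ (S k))).
    apply Rmult_le_compat_l; lra. right; field; lra.
Qed.

Lemma sum_bound (u : nat -> R) m B :
  0 <= B -> (forall kk, (kk < m)%nat -> u kk <= B) -> (forall kk, (m <= kk)%nat -> u kk = 0) ->
  forall N, sum_f_R0 u N <= INR m * B.
Proof.
  intros HB H1 H2.
  assert (forall N, sum_f_R0 u N <= INR (Nat.min (S N) m) * B).
  { induction N as [|N IH]; simpl sum_f_R0.
    - destruct m. rewrite H2 by lia. simpl. lra. simpl. assert (H0 : (0 < S m)%nat) by lia. specialize (H1 O H0). lra.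
    - destruct (Compare_dec.le_lt_dec m (S N)).
      + rewrite H2 by lia. rewrite Nat.min_r by lia. rewrite Nat.min_r in IH by lia. lra.
      + rewrite Nat.min_l by lia. rewrite Nat.min_l in IH by lia.
        rewrite (S_INR (S N)). specialize (H1 (S N) l). lra. }
  intro N. apply Rle_trans with (INR (Nat.min (S N) m) * B); auto.
  apply Rmult_le_compat_r; auto. apply le_INR. lia.
Qed.

Definition idx {n} (j : Fin.t n) : nat := proj1_sig (Fin.to_nat j).

Lemma idx_lt {n} (j : Fin.t n) : (idx j < n)%nat.
Proof. unfold idx. destruct (Fin.to_nat j); simpl; auto. Qed.

Lemma cube_meas k (c : pt (S k)) s : 0 < s -> leb_measurable (cube c s).
Proof.
  intros Hs eps Heps. set (d := S k).
  set (Q := 2 * INR d * (4 * s) ^ k + 1).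
  assert (HQ : 1 <= Q).
  { unfold Q. assert (0 <= INR d) by apply pos_INR. assert (0 <= (4*s)^k) by (apply pow_le; lra). nra. }
  set (r := Rmin s (eps / Q)).
  assert (Hr : 0 < r) by (apply Rmin_pos; auto; apply Rdiv_lt_0_compat; lra).
  assert (Hrs : r <= s) by apply Rmin_l.
  assert (Hre : r <= eps / Q) by apply Rmin_r.
  exists (fun z => forall i, c i - s - r < z i < c i + s + r). split; [|split].
  - intros z Hz. destruct (fin_min (S k) (fun i e => forall y, Rabs (y - z i) < e -> c i - s - r < y < c i + s + r)) as [e [He HH]].
    { intro i. specialize (Hz i). exists (Rmin (z i - (c i - s - r)) (c i + s + r - z i)). split.
      apply Rmin_pos; lra. intros e' [He' He''] y Hy.
      assert (Rmin (z i - (c i - s - r)) (c i + s + r - z i) <= z i - (c i - s - r)) by apply Rmin_l.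
      assert (Rmin (z i - (c i - s - r)) (c i + s + r - z i) <= c i + s + r - z i) by apply Rmin_r.
      revert Hy; split_Rabs; lra. }
    exists e; split; [auto|]. intros y Hy i. apply HH; auto.
  - intros x Hx i. specialize (Hx i). lra.
  - set (L := 2 * s + 2 * r).
    set (a := fun kk (j : Fin.t d) => if Nat.ltb kk d then c j - s - r
                 else if Nat.ltb kk (2 * d) then (if Nat.eqb (idx j) (kk - d) then c j + s else c j - s - r) else 0).
    set (b := fun kk (j : Fin.t d) => if Nat.ltb kk d then (if Nat.eqb (idx j) kk then c j - s else c j + s + r)
                 else if Nat.ltb kk (2 * d) then c j + s + r else 0).
    intros eta Heta. exists a, b. split; [|split].
    + intros kk j. unfold a, b. destruct (Nat.ltb kk d); [destruct (Nat.eqb (idx j) kk)|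
        destruct (Nat.ltb kk (2*d)); [destruct (Nat.eqb (idx j) (kk - d))|]]; lra.
    + intros x [Hx Hnc]. apply not_all_ex_not in Hnc. destruct Hnc as [i Hi].
      destruct (Rlt_le_dec (x i) (c i - s)) as [Hlt|Hge].
      * exists (idx i). intro j. unfold a, b. assert (Hid := idx_lt i).
        replace (Nat.ltb (idx i) d) with true by (symmetry; apply Nat.ltb_lt; auto).
        specialize (Hx j). destruct (Nat.eqb (idx j) (idx i)) eqn:E.
        -- apply Nat.eqb_eq in E. apply Fin.to_nat_inj in E. subst j. lra.
        -- lra.
      * assert (Hgt : c i + s < x i) by (apply Rnot_le_lt; intro; apply Hi; lra).
        exists (d + idx i)%nat. intro j. unfold a, b. assert (Hid := idx_lt i).
        replace (Nat.ltb (d + idx i) d) with false by (symmetry; apply Nat.ltb_ge; lia).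
        replace (Nat.ltb (d + idx i) (2 * d)) with true by (symmetry; apply Nat.ltb_lt; lia).
        replace (d + idx i - d)%nat with (idx i) by lia.
        specialize (Hx j). destruct (Nat.eqb (idx j) (idx i)) eqn:E.
        -- apply Nat.eqb_eq in E. apply Fin.to_nat_inj in E. subst j. lra.
        -- lra.
    + intro N. apply Rle_trans with (eps); [|lra].
      apply Rle_trans with (INR (2 * d) * (r * (4 * s) ^ k)).
      * apply sum_bound.
        -- assert (0 <= (4*s)^k) by (apply pow_le; lra). nra.
        -- intros kk Hkk. unfold box_vol.
           assert (HL : 0 < L) by (unfold L; lra).
           assert (Hj : exists j0 : Fin.t d, idx j0 = (if Nat.ltb kk d then kk else kk - d)%nat).
           { destruct (Nat.ltb kk d) eqn:E.
             - apply Nat.ltb_lt in E. exists (Fin.of_nat_lt E). unfold idx. rewrite Fin.to_nat_of_nat. auto.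
             - apply Nat.ltb_ge in E. assert (H' : (kk - d < d)%nat) by lia.
               exists (Fin.of_nat_lt H'). unfold idx. rewrite Fin.to_nat_of_nat. auto. }
           destruct Hj as [j0 Hj0].
           rewrite (prodFin_ext _ _ (fun j => L * ((b kk j - a kk j) / L))) by (intro; field; lra).
           rewrite prodFin_scale.
           assert (Hbd : forall j, 0 <= (b kk j - a kk j) / L <= 1).
           { intro j. unfold a, b. split.
             - apply Rdiv_le_0_compat; auto. destruct (Nat.ltb kk d); [destruct (Nat.eqb (idx j) kk)|
               destruct (Nat.ltb kk (2*d)); [destruct (Nat.eqb (idx j) (kk - d))|]]; lra.
             - apply Rle_trans with (L / L); [|right; field; lra]. apply Rmult_le_compat_r.
               left; apply Rinv_0_lt_compat; auto.
               unfold L. destruct (Nat.ltb kk d); [destruct (Nat.eqb (idx j) kk)|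
               destruct (Nat.ltb kk (2*d)); [destruct (Nat.eqb (idx j) (kk - d))|]]; lra. }
           assert (Hp := prodFin_pick d _ Hbd j0). cbv beta in Hp.
           assert (Hj0v : (b kk j0 - a kk j0) / L = r / L).
           { unfold a, b. destruct (Nat.ltb kk d) eqn:E.
             - rewrite Hj0, Nat.eqb_refl. f_equal; ring.
             - replace (Nat.ltb kk (2 * d)) with true by (symmetry; apply Nat.ltb_lt; lia).
               rewrite Hj0, Nat.eqb_refl. f_equal; ring. }
           rewrite Hj0v in Hp.
           apply Rle_trans with (L ^ d * (r / L)).
           apply Rmult_le_compat_l; auto. apply pow_le; lra.
           unfold d. simpl. replace (L * L ^ k * (r / L)) with (r * L ^ k) by (field; lra).
           apply Rmult_le_compat_l; [lra|]. apply pow_incr. unfold L; lra.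
        -- intros kk Hkk. unfold box_vol, a, b.
           replace (Nat.ltb kk d) with false by (symmetry; apply Nat.ltb_ge; lia).
           replace (Nat.ltb kk (2 * d)) with false by (symmetry; apply Nat.ltb_ge; lia).
           rewrite (prodFin_ext _ _ (fun _ => 0)) by (intro; ring). apply prodFin_zero.
      * assert (0 <= (4*s)^k) by (apply pow_le; lra).
        assert (HI : INR (2 * d) * (4 * s) ^ k <= Q) by (unfold Q; rewrite mult_INR; simpl; lra).
        apply Rle_trans with (r * Q). rewrite <- Rmult_assoc, (Rmult_comm (INR (2*d)) r), Rmult_assoc.
        apply Rmult_le_compat_l; lra.
        apply Rle_trans with (eps / Q * Q). apply Rmult_le_compat_r; lra. right; field; lra.
Qed.

Lemma cont_sub {d} (f g : pt d -> R) : cont_fun f -> cont_fun g -> cont_fun (fun z => f z - g z).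
Proof.
  intros Hf Hg x e He. destruct (Hf x (e/2)) as [h1 [H1 H1']]; [lra|].
  destruct (Hg x (e/2)) as [h2 [H2 H2']]; [lra|].
  exists (Rmin h1 h2). split. apply Rmin_pos; auto. intros y Hy.
  assert (A1 := H1' y (fun i => Rlt_le_trans _ _ _ (Hy i) (Rmin_l _ _))).
  assert (A2 := H2' y (fun i => Rlt_le_trans _ _ _ (Hy i) (Rmin_r _ _))).
  revert A1 A2; split_Rabs; lra.
Qed.

Lemma cont_const {d} (c : R) : cont_fun (fun _ : pt d => c).
Proof. intros x e He. exists 1. split; [lra|]. intros. rewrite Rminus_diag, Rabs_R0; auto. Qed.

Lemma Rmin_close a b a' b' e : Rabs (a - a') < e -> Rabs (b - b') < e -> Rabs (Rmin a b - Rmin a' b') < e.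
Proof. intros. unfold Rmin. destruct (Rle_dec a b); destruct (Rle_dec a' b'); revert H H0; split_Rabs; lra. Qed.

Lemma cont_min {d} (f g : pt d -> R) : cont_fun f -> cont_fun g -> cont_fun (fun z => Rmin (f z) (g z)).
Proof.
  intros Hf Hg x e He. destruct (Hf x e) as [h1 [H1 H1']]; [lra|].
  destruct (Hg x e) as [h2 [H2 H2']]; [lra|].
  exists (Rmin h1 h2). split. apply Rmin_pos; auto. intros y Hy.
  apply Rmin_close.
  apply (H1' y (fun i => Rlt_le_trans _ _ _ (Hy i) (Rmin_l _ _))).
  apply (H2' y (fun i => Rlt_le_trans _ _ _ (Hy i) (Rmin_r _ _))).
Qed.

Lemma open_and {d} (A B : pt d -> Prop) : rd_open A -> rd_open B -> rd_open (fun z => A z /\ B z).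
Proof.
  intros HA HB x [Ha Hb]. destruct (HA x Ha) as [e1 [E1 H1]]. destruct (HB x Hb) as [e2 [E2 H2]].
  exists (Rmin e1 e2). split. apply Rmin_pos; auto. intros y Hy. split.
  apply H1; intro i; apply Rlt_le_trans with (1 := Hy i); apply Rmin_l.
  apply H2; intro i; apply Rlt_le_trans with (1 := Hy i); apply Rmin_r.
Qed.

Lemma open_lt {d} (h : pt d -> R) c : cont_fun h -> rd_open (fun z => h z < c).
Proof.
  intros Hh x Hx. destruct (Hh x (c - h x)) as [e [He H]]; [lra|]. exists e; split; auto.
  intros y Hy. specialize (H y Hy). revert H; split_Rabs; lra.
Qed.

Lemma open_gt {d} (h : pt d -> R) c : cont_fun h -> rd_open (fun z => c < h z).
Proof.
  intros Hh x Hx. destruct (Hh x (h x - c)) as [e [He H]]; [lra|]. exists e; split; auto.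
  intros y Hy. specialize (H y Hy). revert H; split_Rabs; lra.
Qed.

Lemma open_neq {d} (h : pt d -> R) c : cont_fun h -> rd_open (fun z => h z <> c).
Proof.
  intros Hh x Hx. destruct (Rlt_or_le (h x) c).
  - destruct (open_lt h c Hh x H) as [e [He H']]. exists e; split; auto. intros y Hy. specialize (H' y Hy). lra.
  - assert (c < h x) by lra. destruct (open_gt h c Hh x H0) as [e [He H']]. exists e; split; auto.
    intros y Hy. specialize (H' y Hy). lra.
Qed.

Lemma open_imp {d} (P : Prop) (A : pt d -> Prop) : rd_open A -> rd_open (fun z => P -> A z).
Proof.
  intros HA x Hx. destruct (classic P) as [p|np].
  - destruct (HA x (Hx p)) as [e [He H]]. exists e; split; auto.
  - exists 1; split; [lra|]. intros; contradiction.
Qed.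

Lemma open_forall {d} n (A : Fin.t n -> pt d -> Prop) : (forall j, rd_open (A j)) -> rd_open (fun z => forall j, A j z).
Proof.
  intros HA x Hx. destruct (fin_min n (fun j e => forall y, (forall i, Rabs (y i - x i) < e) -> A j y)) as [e [He H]].
  { intro j. destruct (HA j x (Hx j)) as [e [He H]]. exists e; split; auto.
    intros e' [He' He''] y Hy. apply H. intro i. apply Rlt_le_trans with e'; auto. }
  exists e; split; [auto|]. intros y Hy j. apply H; auto.
Qed.

Lemma open_ball {d} (x : pt d) e : rd_open (ball x e).
Proof.
  intros z Hz. destruct (fin_min d (fun i e' => forall y, Rabs (y - z i) < e' -> Rabs (y - x i) < e)) as [e' [He' H]].
  { intro i. specialize (Hz i). exists (e - Rabs (z i - x i)). split. lra.
    intros e'' [H1 H2] y Hy. revert Hy Hz H2; split_Rabs; lra. }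
  exists e'; split; [auto|]. intros y Hy i. apply H; auto.
Qed.

Lemma bounded_sub {d} (A B : pt d -> Prop) : rd_bounded B -> (forall z, A z -> B z) -> rd_bounded A.
Proof. intros [M HM] H. exists M. intros x Hx. apply HM; auto. Qed.

Lemma open_not_cube {d} (c : pt d) s : rd_open (fun z => ~ cube c s z).
Proof.
  intros x Hx. apply not_all_ex_not in Hx. destruct Hx as [i Hi].
  assert (Hd : s < Rabs (x i - c i)).
  { apply Rnot_le_lt. intro. apply Hi. revert H; split_Rabs; lra. }
  exists (Rabs (x i - c i) - s). split. lra. intros y Hy Hc. specialize (Hy i). specialize (Hc i).
  revert Hy Hd; split_Rabs; lra.
Qed.

Lemma cont_pt_elim (f : R -> R) x : continuity_pt f x ->
  forall eps, 0 < eps -> exists alp, 0 < alp /\ forall y, y <> x -> Rabs (y - x) < alp -> Rabs (f y - f x) < eps.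
Proof.
  intros H eps He. destruct (H eps He) as [alp [Ha Hb]]. exists alp; split; auto.
  intros y Hy Hd. apply (Hb y). split. split; [exact I|auto]. simpl. unfold R_dist. auto.
Qed.

Lemma cont_diff {d n} (dist : Fin.t n -> pt d -> R) i j :
  (forall i, cont_fun (dist i)) -> cont_fun (fun z => dist i z - dist j z).
Proof. intros H. apply cont_sub; auto. Qed.

Lemma open_Rgam {d n} (dist : Fin.t n -> pt d -> R) i j g :
  (forall i, cont_fun (dist i)) -> rd_open (Rgam dist i j g).
Proof. intros H. unfold Rgam. apply (open_lt (fun z => dist i z - dist j z)). apply cont_diff; auto. Qed.

Lemma adm_mono k n (mu : (pt (S k) -> Prop) -> ereal) (dist : Fin.t n -> pt (S k) -> R) (D : pt (S k) -> Prop) i j :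
  is_measure_on_leb mu -> admissible mu dist -> (forall i, cont_fun (dist i)) ->
  rd_bounded D -> rd_open D -> i <> j ->
  exists f, (forall g, mu (fun z => D z /\ Rgam dist i j g z) = ER (f g)) /\ continuity f /\
    (forall g1 g2, g1 <= g2 -> f g1 <= f g2) /\ (forall g, 0 <= f g).
Proof.
  intros Hmu Had Hc HDb HDo Hij.
  destruct (Had i j Hij D HDb HDo) as [m [M [HmM [f [Hf [Hfc [Hfm [Hf0 [HfM [Hlo Hhi]]]]]]]]]].
  exists f.
  assert (Hnn : forall g, 0 <= f g).
  { intro g. apply (mu_nonneg mu (fun z => D z /\ Rgam dist i j g z) (f g) Hmu); auto.
    apply open_meas. apply open_and; auto. apply open_Rgam; auto. }
  assert (Hlow : forall g, g <= m -> f g = 0).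
  { intros g Hg. apply ER_inj. rewrite <- Hf. apply mu_empty; auto. intros z [Hz Hr]. apply (Hlo g Hg z Hz Hr). }
  assert (Hhigh : forall g, M <= g -> f g = f M).
  { intros g Hg. apply ER_inj. rewrite <- Hf, <- HfM. apply mu_ext. intro z; split; [tauto|].
    intro Hz; split; auto. }
  split; auto. split; auto. split; auto.
  intros g1 g2 H12.
  destruct (Rle_dec M g1). rewrite (Hhigh g1), (Hhigh g2) by lra. lra.
  destruct (Rle_dec g2 m). rewrite (Hlow g1), (Hlow g2) by lra. lra.
  assert (E1 : f g1 = f (Rmax g1 m)).
  { unfold Rmax. destruct (Rle_dec g1 m). rewrite Hlow by lra. auto. auto. }
  assert (E2 : f g2 = f (Rmin g2 M)).
  { unfold Rmin. destruct (Rle_dec g2 M). auto. rewrite (Hhigh g2) by lra. auto. }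
  rewrite E1, E2. apply Hfm.
  apply Rmax_r. unfold Rmax, Rmin; destruct (Rle_dec g1 m); destruct (Rle_dec g2 M); lra.
  apply Rmin_r.
Qed.


Lemma strict_step k n (mu : (pt (S k) -> Prop) -> ereal) (dist : Fin.t n -> pt (S k) -> R) (D : pt (S k) -> Prop) i j c1 c2 z1 :
  is_measure_on_leb mu -> mutually_ac_leb mu -> admissible mu dist -> (forall i, cont_fun (dist i)) ->
  (exists X : pt (S k) -> Prop, rd_bounded X /\ ~ leb_null X) ->
  rd_bounded D -> rd_open D -> i <> j -> D z1 ->
  c1 < dist i z1 - dist j z1 < c2 ->
  exists a b, mu (fun z => D z /\ Rgam dist i j c1 z) = ER a /\
              mu (fun z => D z /\ Rgam dist i j c2 z) = ER b /\ a < b.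
Proof.
  intros Hmu Hac Had Hc [X [HXb HXn]] HDb HDo Hij Hz1 [Hc1 Hc2].
  set (h := fun z => dist i z - dist j z).
  assert (Hh : cont_fun h) by (apply cont_diff; auto).
  set (W := fun z => D z /\ c1 < h z /\ h z < c2).
  assert (HWo : rd_open W).
  { apply open_and; auto. apply open_and. apply open_gt; auto. apply open_lt; auto. }
  destruct (HWo z1) as [e [He HeW]]. { unfold W, h. auto. }
  set (K := cube z1 (e/2)).
  assert (HKW : forall z, K z -> W z).
  { intros z Hz. apply HeW. intro l. specialize (Hz l). split_Rabs; lra. }
  assert (HKm : leb_measurable K) by (apply cube_meas; lra).
  assert (HKn : ~ leb_null K) by (apply (cube_nonnull k z1 (e/2) X); auto; lra).
  set (D' := fun z => D z /\ ~ K z).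
  assert (HD'o : rd_open D') by (apply open_and; auto; apply open_not_cube).
  assert (HD'b : rd_bounded D') by (apply (bounded_sub D' D); auto; intros z [Hz _]; auto).
  destruct (adm_mono k n mu dist D i j Hmu Had Hc HDb HDo Hij) as [f [Hf [_ [_ _]]]].
  destruct (adm_mono k n mu dist D' i j Hmu Had Hc HD'b HD'o Hij) as [f' [Hf' [_ [Hf'm _]]]].
  exists (f c1), (f c2). split; auto. split; auto.
  assert (E1 : f c1 = f' c1).
  { apply ER_inj. rewrite <- Hf, <- Hf'. apply mu_ext. intro z. unfold D', Rgam. split.
    - intros [Hz Hr]. split; auto. split; auto. intro HK. destruct (HKW z HK) as [_ [Hw _]]. unfold h in Hw. lra.
    - intros [[Hz _] Hr]; auto. }
  assert (E2 : mu (fun z => (fun z => D' z /\ Rgam dist i j c2 z) z \/ K z) = ER (f c2)).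
  { rewrite <- Hf. apply mu_ext. intro z. split.
    - intros [[[Hz HnK] Hr]|HK]; auto. destruct (HKW z HK) as [Hd [_ Hw]]. split; auto.
    - intros [Hz Hr]. destruct (classic (K z)); auto. left. split; auto. split; auto. }
  destruct (additive2 k mu (fun z => D' z /\ Rgam dist i j c2 z) K (f c2) Hmu) as [x [kv [Hx [Hkv Hs]]]]; auto.
  { apply open_meas. apply open_and; auto. apply open_Rgam; auto. }
  { intros z [[_ HnK] _] HK; auto. }
  assert (Hkpos : 0 < kv).
  { assert (0 <= kv) by (apply (mu_nonneg mu K kv Hmu); auto).
    destruct (Rle_lt_or_eq_dec _ _ H); auto. subst kv. exfalso. apply HKn. apply Hac; auto. }
  rewrite Hf' in Hx. apply ER_inj in Hx. rewrite E1, Hs, <- Hx.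
  assert (f' c1 <= f' c2) by (apply Hf'm; lra). lra.
Qed.

Lemma no_open_level k n (mu : (pt (S k) -> Prop) -> ereal) (dist : Fin.t n -> pt (S k) -> R) (V : pt (S k) -> Prop) i j z0 g :
  is_measure_on_leb mu -> mutually_ac_leb mu -> admissible mu dist -> (forall i, cont_fun (dist i)) ->
  (exists X : pt (S k) -> Prop, rd_bounded X /\ ~ leb_null X) ->
  rd_bounded V -> rd_open V -> i <> j -> V z0 ->
  ~ (forall z, V z -> dist i z - dist j z = g).
Proof.
  intros Hmu Hac Had Hc NN HVb HVo Hij Hz0 Hall.
  destruct (adm_mono k n mu dist V i j Hmu Had Hc HVb HVo Hij) as [f [Hf [Hfc [Hfm _]]]].
  destruct (strict_step k n mu dist V i j (g - 1) (g + 1) z0 Hmu Hac Had Hc NN HVb HVo Hij Hz0) as [a [b [Ha [Hb Hab]]]].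
  { rewrite (Hall z0 Hz0). lra. }
  assert (Hg : f g = 0).
  { apply ER_inj. rewrite <- Hf. apply mu_empty; auto. intros z [Hz Hr]. unfold Rgam in Hr. rewrite (Hall z Hz) in Hr. lra. }
  assert (Ha0 : a = 0).
  { apply ER_inj. rewrite <- Ha. apply mu_empty; auto. intros z [Hz Hr]. unfold Rgam in Hr. rewrite (Hall z Hz) in Hr. lra. }
  assert (Hup : forall c, g < c -> f c = b).
  { intros c Hc'. apply ER_inj. rewrite <- Hf, <- Hb. apply mu_ext. intro z. unfold Rgam. split; intros [Hz Hr]; split; auto;
    rewrite (Hall z Hz); lra. }
  destruct (cont_pt_elim f g (Hfc g) b) as [alp [Halp H]]. lra.
  specialize (H (g + alp/2)). rewrite Hup in H by lra. rewrite Hg in H.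
  assert (Rabs (b - 0) < b). apply H. lra. replace (g + alp/2 - g) with (alp/2) by ring. rewrite Rabs_right; lra.
  rewrite Rminus_0_r, Rabs_right in H0; lra.
Qed.

Fixpoint lmin (a : R) (l : list R) : R := match l with nil => a | x :: l' => Rmin x (lmin a l') end.

Lemma lmin_le_a a l : lmin a l <= a.
Proof. induction l; simpl. lra. apply Rle_trans with (lmin a l); auto. apply Rmin_r. Qed.

Lemma lmin_le_in a l x : In x l -> lmin a l <= x.
Proof.
  induction l as [|y l IH]; simpl. tauto. intros [<-|H]. apply Rmin_l.
  apply Rle_trans with (lmin a l); auto. apply Rmin_r.
Qed.

Lemma lmin_att a l : lmin a l = a \/ In (lmin a l) l.
Proof.
  induction l as [|y l IH]; simpl. auto. unfold Rmin. destruct (Rle_dec y (lmin a l)). right; left; auto.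
  destruct IH as [H|H]; auto.
Qed.

Lemma cont_lmin {d n} (f0 : pt d -> R) (F : Fin.t n -> pt d -> R) L :
  cont_fun f0 -> (forall j, cont_fun (F j)) -> cont_fun (fun z => lmin (f0 z) (map (fun j => F j z) L)).
Proof.
  intros H0 HF. induction L as [|j L IH]; simpl; auto. apply cont_min; auto.
Qed.

Definition cand {d n} (P : Fin.t n -> Prop) (seed : Fin.t n) (phi : Fin.t n -> pt d -> R) j z :=
  if excluded_middle_informative (P j) then phi j z else phi seed z.

Definition minP {d n} (P : Fin.t n -> Prop) (seed : Fin.t n) (phi : Fin.t n -> pt d -> R) z :=
  lmin (phi seed z) (map (fun j => cand P seed phi j z) (fin_enum n)).

Lemma minP_le {d n} P seed (phi : Fin.t n -> pt d -> R) z j : P j -> minP P seed phi z <= phi j z.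
Proof.
  intro Hj. unfold minP. replace (phi j z) with (cand P seed phi j z).
  apply lmin_le_in. apply (in_map (fun j0 => cand P seed phi j0 z)). apply fin_enum_all.
  unfold cand. destruct (excluded_middle_informative (P j)); tauto.
Qed.

Lemma minP_att {d n} P seed (phi : Fin.t n -> pt d -> R) z : P seed -> exists j, P j /\ minP P seed phi z = phi j z.
Proof.
  intro Hs. unfold minP. destruct (lmin_att (phi seed z) (map (fun j => cand P seed phi j z) (fin_enum n))) as [H|H].
  exists seed; auto. apply in_map_iff in H. destruct H as [j [Hj _]]. rewrite <- Hj. unfold cand.
  destruct (excluded_middle_informative (P j)). exists j; auto. exists seed; auto.
Qed.

Lemma minP_cont {d n} P seed (phi : Fin.t n -> pt d -> R) : (forall j, cont_fun (phi j)) -> cont_fun (minP P seed phi).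
Proof.
  intro H. unfold minP. apply (cont_lmin (phi seed) (fun j z => cand P seed phi j z)); auto.
  intro j. unfold cand. destruct (excluded_middle_informative (P j)); auto.
Qed.

Lemma tie_break k n (mu : (pt (S k) -> Prop) -> ereal) (dist : Fin.t n -> pt (S k) -> R) (C : pt (S k) -> Prop) (w : Fin.t n -> R) :
  is_measure_on_leb mu -> mutually_ac_leb mu -> admissible mu dist -> (forall i, cont_fun (dist i)) ->
  (exists X : pt (S k) -> Prop, rd_bounded X /\ ~ leb_null X) ->
  rd_bounded C -> rd_open C ->
  forall L : list (Fin.t n * Fin.t n), forall z0 e, 0 < e -> (forall z, ball z0 e z -> C z) ->
  exists z1 e1, 0 < e1 /\ (forall z, ball z1 e1 z -> ball z0 e z) /\
    forall p, In p L -> fst p <> snd p -> forall z, ball z1 e1 z -> dist (fst p) z - w (fst p) <> dist (snd p) z - w (snd p).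
Proof.
  intros Hmu Hac Had Hc NN HCb HCo L. induction L as [|[i j] L IH]; intros z0 e He HC.
  - exists z0, e. split; [auto|]. split; [auto|]. intros p [].
  - destruct (IH z0 e He HC) as [z1 [e1 [He1 [Hsub Hp]]]].
    destruct (Fin.eq_dec i j) as [Eij|Nij].
    + exists z1, e1. split; [auto|]. split; [auto|]. intros p [Hp'|Hp'] Hne. subst p. simpl in Hne. contradiction.
      apply Hp; auto.
    + set (V := fun z => C z /\ ball z1 e1 z).
      assert (HV1 : V z1).
      { split. apply HC, Hsub. intro l. rewrite Rminus_diag, Rabs_R0; auto. intro l. rewrite Rminus_diag, Rabs_R0; auto. }
      assert (Hno := no_open_level k n mu dist V i j z1 (w i - w j) Hmu Hac Had Hc NN
                (bounded_sub V C HCb (fun z Hz => proj1 Hz)) (open_and _ _ HCo (open_ball z1 e1)) Nij HV1).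
      apply not_all_ex_not in Hno. destruct Hno as [z2 Hz2].
      apply imply_to_and in Hz2. destruct Hz2 as [[_ HB2] Hne].
      set (W := fun z => ball z1 e1 z /\ dist i z - dist j z <> w i - w j).
      assert (HWo : rd_open W).
      { apply open_and. apply open_ball. apply (open_neq (fun z => dist i z - dist j z)). apply cont_diff; auto. }
      destruct (HWo z2) as [e2 [He2 HW2]]. split; auto.
      exists z2, e2. split; [auto|]. split.
      * intros z Hz. apply Hsub. apply (HW2 z Hz).
      * intros p [Hp'|Hp'] Hpn z Hz.
        -- subst p. simpl. destruct (HW2 z Hz) as [_ H]. intro E; apply H; lra.
        -- apply Hp; auto. apply (HW2 z Hz).
Qed.

Definition Sg {d n} (C : pt d -> Prop) (dist : Fin.t n -> pt d -> R) (t : Fin.t n) (g : Fin.t n -> R) :=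
  fun z => C z /\ forall j, j <> t -> Rgam dist t j (g j) z.

Lemma Sg_open {d n} C (dist : Fin.t n -> pt d -> R) t g :
  rd_open C -> (forall i, cont_fun (dist i)) -> rd_open (Sg C dist t g).
Proof.
  intros HC Hc. apply open_and; auto.
  apply (open_forall n (fun j z => j <> t -> Rgam dist t j (g j) z)). intro j.
  apply open_imp. apply open_Rgam; auto.
Qed.

Lemma Sg_ext {d n} (mu : (pt d -> Prop) -> ereal) C (dist : Fin.t n -> pt d -> R) t g1 g2 :
  (forall j, g1 j = g2 j) -> mu (Sg C dist t g1) = mu (Sg C dist t g2).
Proof.
  intro H. apply mu_ext. intro z. unfold Sg, Rgam. split; intros [Hz Hr]; split; auto; intros j Hj; specialize (Hr j Hj);
  rewrite H in *; auto.
Qed.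

Lemma mu_fin k n (mu : (pt (S k) -> Prop) -> ereal) (dist : Fin.t n -> pt (S k) -> R) (D : pt (S k) -> Prop) (i j : Fin.t n) :
  admissible mu dist -> rd_bounded D -> rd_open D -> i <> j -> exists a, mu D = ER a.
Proof.
  intros Had Hb Ho Hij. destruct (Had i j Hij D Hb Ho) as [m [M [_ [f [_ [_ [_ [_ [HfM _]]]]]]]]].
  eauto.
Qed.

Lemma step_mono k n (mu : (pt (S k) -> Prop) -> ereal) (dist : Fin.t n -> pt (S k) -> R) C t s g g' j0 :
  is_measure_on_leb mu -> admissible mu dist -> (forall i, cont_fun (dist i)) ->
  rd_bounded C -> rd_open C -> s <> t ->
  (forall j, j <> j0 -> g j = g' j) -> g j0 <= g' j0 ->
  exists a b, mu (Sg C dist t g) = ER a /\ mu (Sg C dist t g') = ER b /\ a <= b.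
Proof.
  intros Hmu Had Hc HCb HCo Hst Heq Hle.
  destruct (Fin.eq_dec j0 t) as [E|N].
  - subst j0. destruct (mu_fin k n mu dist (Sg C dist t g) s t Had) as [a Ha]; auto.
    apply (bounded_sub _ C HCb). intros z [Hz _]; auto. apply Sg_open; auto.
    exists a, a. split; auto. split; [|lra]. rewrite <- Ha. symmetry. apply mu_ext. intro z; unfold Sg, Rgam.
    split; intros [Hz Hr]; split; auto; intros j Hj; specialize (Hr j Hj); rewrite Heq in * by auto; auto.
  - set (D := fun z => C z /\ forall j, j <> t -> j <> j0 -> Rgam dist t j (g j) z).
    assert (HDo : rd_open D).
    { apply open_and; auto. apply (open_forall n (fun j z => j <> t -> j <> j0 -> Rgam dist t j (g j) z)). intro j.
      apply open_imp. apply open_imp. apply open_Rgam; auto. }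
    assert (HDb : rd_bounded D) by (apply (bounded_sub _ C HCb); intros z [Hz _]; auto).
    destruct (adm_mono k n mu dist D t j0 Hmu Had Hc HDb HDo (not_eq_sym N)) as [f [Hf [_ [Hfm _]]]].
    exists (f (g j0)), (f (g' j0)). split; [|split].
    + rewrite <- Hf. apply mu_ext. intro z. unfold Sg, D. split.
      * intros [Hz Hr]. split; [split; auto|]. apply Hr; auto.
      * intros [[Hz Hr] Hr0]. split; auto. intros j Hj. destruct (Fin.eq_dec j j0). subst; auto. auto.
    + rewrite <- Hf. apply mu_ext. intro z. unfold Sg, D. split.
      * intros [Hz Hr]. split; [split; auto|]. intros j Hj Hj0. rewrite Heq by auto. apply Hr; auto. apply Hr; auto.
      * intros [[Hz Hr] Hr0]. split; auto. intros j Hj. destruct (Fin.eq_dec j j0). subst; auto.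
        rewrite <- Heq by auto. auto.
    + apply Hfm; auto.
Qed.

Lemma chain_mono k n (mu : (pt (S k) -> Prop) -> ereal) (dist : Fin.t n -> pt (S k) -> R) C t s g g' :
  is_measure_on_leb mu -> admissible mu dist -> (forall i, cont_fun (dist i)) ->
  rd_bounded C -> rd_open C -> s <> t ->
  (forall j, g j <= g' j) ->
  exists a b, mu (Sg C dist t g) = ER a /\ mu (Sg C dist t g') = ER b /\ a <= b.
Proof.
  intros Hmu Had Hc HCb HCo Hst Hle.
  set (upd := fun (L : list (Fin.t n)) j => if in_dec Fin.eq_dec j L then g' j else g j).
  assert (HL : forall L, exists a b, mu (Sg C dist t g) = ER a /\ mu (Sg C dist t (upd L)) = ER b /\ a <= b).
  { induction L as [|j L IH].
    - destruct (mu_fin k n mu dist (Sg C dist t g) s t Had) as [a Ha]; auto.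
      apply (bounded_sub _ C HCb). intros z [Hz _]; auto. apply Sg_open; auto.
      exists a, a. split; auto. split; [|lra]. rewrite <- Ha. apply Sg_ext. intro j. unfold upd. simpl. auto.
    - destruct IH as [a [b [Ha [Hb Hab]]]].
      destruct (step_mono k n mu dist C t s (upd L) (upd (j :: L)) j Hmu Had Hc HCb HCo Hst) as [b1 [b2 [H1 [H2 H12]]]].
      + intros j' Hj'. unfold upd. destruct (in_dec Fin.eq_dec j' L) as [A1|A1]; destruct (in_dec Fin.eq_dec j' (j :: L)) as [A2|A2]; auto.
        exfalso; apply A2; right; auto. exfalso. destruct A2 as [A2|A2]; [apply Hj'; auto|contradiction].
      + unfold upd. destruct (in_dec Fin.eq_dec j L) as [A1|A1]; destruct (in_dec Fin.eq_dec j (j :: L)) as [A2|A2];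
        first [lra | apply Hle | (exfalso; apply A2; left; auto)].
      + exists a, b2. split; auto. split; auto. rewrite Hb in H1. apply ER_inj in H1. lra. }
  destruct (HL (fin_enum n)) as [a [b [Ha [Hb Hab]]]]. exists a, b. split; auto. split; auto.
  rewrite <- Hb. apply Sg_ext. intro j. unfold upd. destruct (in_dec Fin.eq_dec j (fin_enum n)) as [A|A]; auto.
  exfalso; apply A; apply fin_enum_all.
Qed.

Lemma continuity_intro (F : R -> R) :
  (forall t0 eps, 0 < eps -> exists alp, 0 < alp /\ forall t, Rabs (t - t0) < alp -> Rabs (F t - F t0) < eps) ->
  continuity F.
Proof.
  intros H t0 eps He. destruct (H t0 eps He) as [alp [Ha Hb]]. exists alp. split; auto.
  intros t [_ Ht]. apply Hb. apply Ht.
Qed.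

Definition clamp (t : R) := Rmax 0 (Rmin 1 t).

Lemma clamp_in t : 0 <= clamp t <= 1.
Proof. unfold clamp, Rmax, Rmin. destruct (Rle_dec 1 t); destruct (Rle_dec 0 _); lra. Qed.

Lemma clamp_lip t t' : Rabs (clamp t - clamp t') <= Rabs (t - t').
Proof.
  unfold clamp, Rmax, Rmin. destruct (Rle_dec 1 t); destruct (Rle_dec 1 t');
  repeat match goal with |- context [Rle_dec ?a ?b] => destruct (Rle_dec a b) end; split_Rabs; lra.
Qed.

Lemma clamp_id t : 0 <= t <= 1 -> clamp t = t.
Proof. intro. unfold clamp. rewrite Rmin_right by lra. rewrite Rmax_right by lra. auto. Qed.

Lemma path_ivt {d} (C : pt d -> Prop) (G : pt d -> R) x y v :
  cont_fun G -> rd_path_connected C -> C x -> C y -> G x < v -> v < G y ->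
  exists z, C z /\ G z = v.
Proof.
  intros HG Hpc Hx Hy H1 H2. destruct (Hpc x y Hx Hy) as [p [Hp0 [Hp1 [HpC Hpc']]]].
  set (F := fun t => G (p (clamp t)) - v).
  assert (HF : continuity F).
  { apply continuity_intro. intros t0 eps He. destruct (HG (p (clamp t0)) eps He) as [hh [Hh HGh]].
    destruct (Hpc' (clamp t0) hh (clamp_in t0) Hh) as [alp [Ha Hpa]].
    exists alp. split; auto. intros t Ht. unfold F.
    replace (G (p (clamp t)) - v - (G (p (clamp t0)) - v)) with (G (p (clamp t)) - G (p (clamp t0))) by ring.
    apply HGh. apply Hpa. apply clamp_in. apply Rle_lt_trans with (Rabs (t - t0)); auto. apply clamp_lip. }
  destruct (IVT F 0 1 HF) as [t [Ht Ht0]]. lra.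
  { unfold F. rewrite clamp_id by lra. rewrite Hp0. lra. }
  { unfold F. rewrite clamp_id by lra. rewrite Hp1. lra. }
  exists (p (clamp t)). split. apply HpC, clamp_in. unfold F in Ht0. lra.
Qed.

Theorem lemma2 (d n : nat) (mu : (pt d -> Prop) -> ereal)
  (site : Fin.t n -> pt d) (dist : Fin.t n -> pt d -> R)
  (C : pt d -> Prop) (T : Fin.t n -> Prop) (w w' : Fin.t n -> R) (delta : R) :
  is_measure_on_leb mu ->
  mutually_ac_leb mu ->
  (forall i j, site i = site j -> i = j) ->
  (forall i z, 0 <= dist i z) ->
  (forall i, cont_fun (dist i)) ->
  admissible mu dist ->
  rd_bounded C -> rd_open C -> rd_path_connected C ->
  (exists t, T t) -> (exists s, ~ T s) ->
  (forall i, ere_lt (ER 0) (mu (fun z => C z /\ VR dist w i z))) ->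
  0 < delta ->
  (forall i, T i -> w' i = w i + delta) ->
  (forall i, ~ T i -> w' i = w i) ->
  exists t, T t /\
    ere_lt (mu (fun z => C z /\ VR dist w t z)) (mu (fun z => C z /\ VR dist w' t z)).
Proof.
  intros Hmu Hac _ _ Hc Had HCb HCo Hpc [t1 Ht1] [s1 Hs1] Hpos Hdel HwT HwN.
  assert (Hts : t1 <> s1) by (intro E; subst; contradiction).
  assert (Hne : forall i, exists z, C z /\ VR dist w i z).
  { intro i. apply NNPP. intro Hn. specialize (Hpos i). rewrite mu_empty in Hpos; auto.
    simpl in Hpos; lra. intros z Hz; apply Hn; eauto. }
  destruct d as [|k].
  { exfalso. destruct (Hne t1) as [z1 [_ V1]]. destruct (Hne s1) as [z2 [_ V2]].
    assert (z1 = z2) by (apply functional_extensionality; intro i; inversion i).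
    subst z2. specialize (V1 s1 (not_eq_sym Hts)). specialize (V2 t1 Hts). unfold Rgam in *. lra. }
  assert (HVo : forall (ww : Fin.t n -> R) i, rd_open (fun z => C z /\ VR dist ww i z)).
  { intros ww i. apply (Sg_open C dist i (fun j => ww i - ww j)); auto. }
  assert (NN : exists X : pt (S k) -> Prop, rd_bounded X /\ ~ leb_null X).
  { exists (fun z => C z /\ VR dist w t1 z). split.
    apply (bounded_sub _ C HCb). intros z [Hz _]; auto.
    intro Hn. apply Hac in Hn. specialize (Hpos t1). rewrite Hn in Hpos. simpl in Hpos; lra.
    apply open_meas; auto. }
  set (phi := fun j z => dist j z - w j).
  assert (Hphi : forall j, cont_fun (phi j)).
  { intro j. unfold phi. apply cont_sub; auto. apply cont_const. }
  set (mT := minP T t1 phi). set (mN := minP (fun j => ~ T j) s1 phi).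
  set (G := fun z => mT z - mN z).
  assert (HG : cont_fun G) by (apply cont_sub; apply minP_cont; auto).
  destruct (Hne t1) as [x [Hx Vx]]. destruct (Hne s1) as [y [Hy Vy]].
  assert (Gx : G x < 0).
  { unfold G. assert (mT x <= phi t1 x) by (apply minP_le; auto).
    destruct (minP_att (fun j => ~ T j) s1 phi x Hs1) as [j [Hj Ej]]. fold mN in Ej.
    assert (j <> t1) by (intro E; subst; contradiction).
    specialize (Vx j H0). unfold Rgam in Vx. unfold phi in *. lra. }
  assert (Gy : 0 < G y).
  { unfold G. assert (mN y <= phi s1 y) by (apply (minP_le (fun j => ~ T j)); auto).
    destruct (minP_att T t1 phi y Ht1) as [j [Hj Ej]]. fold mT in Ej.
    assert (j <> s1) by (intro E; subst; contradiction).
    specialize (Vy j H0). unfold Rgam in Vy. unfold phi in *. lra. }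
  set (v := Rmin (delta / 2) (G y / 2)).
  assert (Hv1 : 0 < v) by (apply Rmin_pos; lra).
  assert (Hv2 : v < delta) by (apply Rle_lt_trans with (delta/2); [apply Rmin_l|lra]).
  assert (Hv3 : v < G y) by (apply Rle_lt_trans with (G y/2); [apply Rmin_r|lra]).
  destruct (path_ivt C G x y v HG Hpc Hx Hy) as [z0 [Hz0 Gz0]]; try lra.
  set (W0 := fun z => C z /\ 0 < G z /\ G z < delta).
  assert (HW0 : rd_open W0).
  { apply open_and; auto. apply open_and. apply open_gt; auto. apply open_lt; auto. }
  destruct (HW0 z0) as [e0 [He0 HB0]]. { unfold W0. split; auto. lra. }
  destruct (tie_break k n mu dist C w Hmu Hac Had Hc NN HCb HCo (list_prod (fin_enum n) (fin_enum n)) z0 e0 He0)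
    as [z1 [e1 [He1 [Hsub Hdist]]]].
  { intros z Hz. apply (HB0 z Hz). }
  assert (Hb1 : ball z1 e1 z1) by (intro l; rewrite Rminus_diag, Rabs_R0; auto).
  destruct (HB0 z1 (Hsub z1 Hb1)) as [Cz1 [G1 G2]].
  assert (Hd1 : forall i j, i <> j -> phi i z1 <> phi j z1).
  { intros i j Hij. apply (Hdist (i, j)); auto. apply in_prod; apply fin_enum_all. }
  destruct (minP_att T t1 phi z1 Ht1) as [t [Ht Et]]. fold mT in Et.
  destruct (minP_att (fun j => ~ T j) s1 phi z1 Hs1) as [s [Hs Es]]. fold mN in Es.
  assert (Hst : s <> t) by (intro E; subst; contradiction).
  assert (CT : forall j, T j -> j <> t -> phi t z1 < phi j z1).
  { intros j Hj Hjt. assert (mT z1 <= phi j z1) by (apply minP_le; auto).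
    assert (phi t z1 <> phi j z1) by (apply Hd1; auto). lra. }
  assert (CN : forall j, ~ T j -> phi t z1 - delta < phi j z1).
  { intros j Hj. assert (mN z1 <= phi j z1) by (apply (minP_le (fun j => ~ T j)); auto).
    unfold G in G2. lra. }
  assert (CS : phi s z1 < phi t z1) by (unfold G in G1; lra).
  set (g := fun j => w t - w j). set (g' := fun j => w' t - w' j).
  set (gm := fun j => if Fin.eq_dec j s then g j else g' j).
  assert (Hwt : w' t = w t + delta) by auto.
  assert (Hgg : forall j, g j <= gm j).
  { intro j. unfold gm, g, g'. destruct (Fin.eq_dec j s). lra.
    destruct (classic (T j)) as [Tj|Tj]. rewrite (HwT j Tj), Hwt. lra. rewrite (HwN j Tj), Hwt. lra. }
  destruct (chain_mono k n mu dist C t s g gm Hmu Had Hc HCb HCo Hst Hgg) as [a [b [Ha [Hb Hab]]]].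
  set (D := fun z => C z /\ forall j, j <> t -> j <> s -> Rgam dist t j (g' j) z).
  assert (HDo : rd_open D).
  { apply open_and; auto. apply (open_forall n (fun j z => j <> t -> j <> s -> Rgam dist t j (g' j) z)). intro j.
    apply open_imp. apply open_imp. apply open_Rgam; auto. }
  assert (HDb : rd_bounded D) by (apply (bounded_sub _ C HCb); intros z [Hz _]; auto).
  assert (HDz : D z1).
  { split; auto. intros j Hjt Hjs. unfold Rgam, g'. destruct (classic (T j)) as [Tj|Tj].
    - rewrite (HwT j Tj), Hwt. specialize (CT j Tj Hjt). unfold phi in CT. lra.
    - rewrite (HwN j Tj), Hwt. specialize (CN j Tj). unfold phi in CN. lra. }
  destruct (strict_step k n mu dist D t s (g s) (g' s) z1 Hmu Hac Had Hc NN HDb HDo (not_eq_sym Hst) HDz)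
    as [a' [b' [Ha' [Hb' Hab']]]].
  { unfold g, g'. rewrite (HwN s Hs), Hwt. unfold phi in CS, CN. specialize (CN s Hs). lra. }
  assert (E1 : mu (Sg C dist t gm) = mu (fun z => D z /\ Rgam dist t s (g s) z)).
  { apply mu_ext. intro z. unfold Sg, D, gm. split.
    - intros [Hz Hr]. split. split; auto. intros j Hjt Hjs. specialize (Hr j Hjt).
      destruct (Fin.eq_dec j s). contradiction. auto.
      specialize (Hr s (not_eq_sym (not_eq_sym Hst))). destruct (Fin.eq_dec s s); [auto|contradiction].
    - intros [[Hz Hr] Hr0]. split; auto. intros j Hjt. destruct (Fin.eq_dec j s). subst; auto. auto. }
  assert (E2 : mu (Sg C dist t g') = mu (fun z => D z /\ Rgam dist t s (g' s) z)).
  { apply mu_ext. intro z. unfold Sg, D. split.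
    - intros [Hz Hr]. split. split; auto. apply Hr; auto.
    - intros [[Hz Hr] Hr0]. split; auto. intros j Hjt. destruct (Fin.eq_dec j s). subst; auto. auto. }
  exists t. split; auto.
  change (ere_lt (mu (Sg C dist t g)) (mu (Sg C dist t g'))).
  rewrite Ha, E2, Hb'. simpl. rewrite E1, Ha' in Hb. apply ER_inj in Hb. lra.
Qed.
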